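(* The tree theory $\mathsf{T}$ is interpretable in $\mathsf{Seq}^+$, and thus also in $\mathsf{Seq}$.
   Context: $\mathsf{Seq}$ is the theory in the language $\{e,\vdash,\circ\}$ ($e$ constant, $\vdash$ and $\circ$ binary functions) with axioms: ($\mathsf{Seq}_1$) $\forall xy[x\vdash y\neq e]$; ($\mathsf{Seq}_2$) $\forall x_1x_2y_1y_2[x_1\vdash x_2=y_1\vdash y_2\rightarrow(x_1=y_1\wedge x_2=y_2)]$; ($\mathsf{Seq}_3$) $\forall x[x\circ e=x]$; ($\mathsf{Seq}_4$) $\forall xyz[x\circ(y\vdash z)=(x\circ y)\vdash z]$; ($\mathsf{Seq}_5$) $\forall x[x=e\vee\exists yz[x=y\vdash z]]$. $\mathsf{Seq}^+$ extends $\mathsf{Seq}$ by ($\mathsf{Seq}^*_3$) $\forall x[x\circ e=x\wedge e\circ x=x]$, ($\mathsf{Seq}^*_5$) $\forall xyzw[x\circ y=z\circ w\leftrightarrow\exists u[(z=x\circ u\wedge u\circ w=y)\vee(x=z\circ u\wedge u\circ y=w)]]$, and ($\mathsf{Seq}^+_c$) $\forall xyz[(x\circ y=x\circ z\vee y\circ x=z\circ x)\rightarrow y=z]$. $\mathsf{T}$ is the theory in the language $\{\bot,\langle\cdot,\cdot\rangle,\sqsubseteq\}$ ($\bot$ constant, $\langle\cdot,\cdot\rangle$ binary function, $\sqsubseteq$ binary relation) with axioms: ($\mathsf{T}_1$) $\forall xy[\langle x,y\rangle\neq\bot]$; ($\mathsf{T}_2$) $\forall x_1x_2y_1y_2[\langle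 x_1,x_2\rangle=\langle y_1,y_2\rangle\rightarrow(x_1=y_1\wedge x_2=y_2)]$; ($\mathsf{T}_3$) $\forall x[x\sqsubseteq\bot\leftrightarrow x=\bot]$; ($\mathsf{T}_4$) $\forall xyz[x\sqsubseteq\langle y,z\rangle\leftrightarrow(x=\langle y,z\rangle\vee x\sqsubseteq y\vee x\sqsubseteq z)]$. *)

(* Defs.v *)
From Stdlib Require Import Arith.

Record SeqStr := {
  scar :> Type;
  s_e : scar;
  s_vdash : scar -> scar -> scar;
  s_circ : scar -> scar -> scar }.

Definition Seq_model (M : SeqStr) : Prop :=
  (forall x y : M, s_vdash M x y <> s_e M) /\
  (forall x1 x2 y1 y2 : M, s_vdash M x1 x2 = s_vdash M y1 y2 -> x1 = y1 /\ x2 = y2) /\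
  (forall x : M, s_circ M x (s_e M) = x) /\
  (forall x y z : M, s_circ M x (s_vdash M y z) = s_vdash M (s_circ M x y) z) /\
  (forall x : M, x = s_e M \/ exists y z, x = s_vdash M y z).

Definition SeqPlus_model (M : SeqStr) : Prop :=
  Seq_model M /\
  (forall x : M, s_circ M x (s_e M) = x /\ s_circ M (s_e M) x = x) /\
  (forall x y z w : M, s_circ M x y = s_circ M z w <->
     exists u, (z = s_circ M x u /\ s_circ M u w = y) \/
               (x = s_circ M z u /\ s_circ M u y = w)) /\
  (forall x y z : M, (s_circ M x y = s_circ M x z \/ s_circ M y x = s_circ M z x) -> y = z).

(** * First-order syntax over {e, |-, o}, de Bruijn variables *)
Inductive term :=
  | tvar : nat -> term
  | te : term
  | tvdash : term -> term -> term
  | tcirc : term -> term -> term.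

Inductive form :=
  | fEq : term -> term -> form
  | fFalse : form
  | fImp : form -> form -> form
  | fAnd : form -> form -> form
  | fOr : form -> form -> form
  | fAll : form -> form
  | fEx : form -> form.

Definition scons {M : Type} (a : M) (rho : nat -> M) : nat -> M :=
  fun n => match n with 0 => a | S k => rho k end.

Fixpoint teval (M : SeqStr) (rho : nat -> M) (t : term) : M :=
  match t with
  | tvar n => rho n
  | te => s_e M
  | tvdash a b => s_vdash M (teval M rho a) (teval M rho b)
  | tcirc a b => s_circ M (teval M rho a) (teval M rho b)
  end.

Fixpoint sat (M : SeqStr) (rho : nat -> M) (f : form) : Prop :=
  match f with
  | fEq a b => teval M rho a = teval M rho b
  | fFalse => False
  | fImp p q => sat M rho p -> sat M rho q
  | fAnd p q => sat M rho p /\ sat M rho q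
  | fOr p q => sat M rho p \/ sat M rho q
  | fAll p => forall a : M, sat M (scons a rho) p
  | fEx p => exists a : M, sat M (scons a rho) p
  end.

Fixpoint tbounded (n : nat) (t : term) : Prop :=
  match t with
  | tvar k => k < n
  | te => True
  | tvdash a b | tcirc a b => tbounded n a /\ tbounded n b
  end.

Fixpoint fbounded (n : nat) (f : form) : Prop :=
  match f with
  | fEq a b => tbounded n a /\ tbounded n b
  | fFalse => True
  | fImp p q | fAnd p q | fOr p q => fbounded n p /\ fbounded n q
  | fAll p | fEx p => fbounded (S n) p
  end.

(** * Interpretations of the language {bot, <.,.>, sqsubseteq} of T
    (multidimensional, parameter-free, with a defined equality;
    function symbols translated by formulas defining their graphs).
    Variables 0..m-1 hold the first m-tuple, m..2m-1 the second, etc. *)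
Record interp := {
  i_dim : nat;
  i_dom : form;    (* vars 0..m-1 : the tuple x lies in the domain *)
  i_eq : form;     (* vars x | y : x = y *)
  i_bot : form;    (* vars x : x = bot *)
  i_pair : form;   (* vars x | y | z : <x,y> = z *)
  i_sub : form }.  (* vars x | y : x sqsubseteq y *)

Definition interp_wf (I : interp) : Prop :=
  0 < i_dim I /\
  fbounded (i_dim I) (i_dom I) /\ fbounded (2 * i_dim I) (i_eq I) /\
  fbounded (i_dim I) (i_bot I) /\ fbounded (3 * i_dim I) (i_pair I) /\
  fbounded (2 * i_dim I) (i_sub I).

Definition blk {M : Type} (m : nat) (u rho : nat -> M) : nat -> M :=
  fun n => if n <? m then u n else rho (n - m).

(** A T-structure presented with a domain and an equivalence serving as
    equality, and the function symbols given by their graphs. *)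
Record relTstr := {
  tcar : Type;
  tD : tcar -> Prop;
  tE : tcar -> tcar -> Prop;
  tBot : tcar -> Prop;
  tPair : tcar -> tcar -> tcar -> Prop;
  tSub : tcar -> tcar -> Prop }.

Definition T_model (S : relTstr) : Prop :=
  let D := tD S in let E := tE S in let B := tBot S in
  let P := tPair S in let Sb := tSub S in
  (forall x, D x -> E x x) /\
  (forall x y, D x -> D y -> E x y -> E y x) /\
  (forall x y z, D x -> D y -> D z -> E x y -> E y z -> E x z) /\
  (exists b, D b /\ B b) /\
  (forall b b', D b -> D b' -> B b -> B b' -> E b b') /\
  (forall b b', D b -> D b' -> E b b' -> B b -> B b') /\
  (forall x y, D x -> D y -> exists z, D z /\ P x y z) /\
  (forall x y z z', D x -> D y -> D z -> D z' -> P x y z -> P x y z' -> E z z') /\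
  (forall x y z x' y' z', D x -> D y -> D z -> D x' -> D y' -> D z' ->
     E x x' -> E y y' -> E z z' -> P x y z -> P x' y' z') /\
  (forall x y x' y', D x -> D y -> D x' -> D y' ->
     E x x' -> E y y' -> Sb x y -> Sb x' y') /\
  (forall x y z b, D x -> D y -> D z -> D b -> P x y z -> B b -> ~ E z b) /\
  (forall x1 x2 y1 y2 z z', D x1 -> D x2 -> D y1 -> D y2 -> D z -> D z' ->
     P x1 x2 z -> P y1 y2 z' -> E z z' -> E x1 y1 /\ E x2 y2) /\
  (forall x b, D x -> D b -> B b -> (Sb x b <-> E x b)) /\
  (forall x y z w, D x -> D y -> D z -> D w -> P y z w ->
     (Sb x w <-> (E x w \/ Sb x y \/ Sb x z))).

(** The T-structure defined by I inside M; its elements are m-tuples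
    (functions nat -> M of which only coordinates < m matter). *)
Definition induced (I : interp) (M : SeqStr) : relTstr :=
  let m := i_dim I in
  let r0 : nat -> M := fun _ => s_e M in
  {| tcar := nat -> M;
     tD := fun u => sat M (blk m u r0) (i_dom I);
     tE := fun u v => sat M (blk m u (blk m v r0)) (i_eq I);
     tBot := fun u => sat M (blk m u r0) (i_bot I);
     tPair := fun u v w => sat M (blk m u (blk m v (blk m w r0))) (i_pair I);
     tSub := fun u v => sat M (blk m u (blk m v r0)) (i_sub I) |}.

(** T is interpretable in the theory whose models are given by Th:
    one interpretation I such that every model of Th induces a model of T.
    (By completeness this is equivalent to provability of the translated
    axioms and interpretation conditions in Th.) *)
Definition T_interpretable_in (Th : SeqStr -> Prop) : Prop :=
  exists I : interp, interp_wf I /\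
    forall M : SeqStr, Th M -> T_model (induced I M).

(* Main.v *)
Require Import Defs.
From Stdlib Require Import Lia.

Section S.
Variable M : SeqStr.
Hypothesis HM : Seq_model M.
Local Notation e := (s_e M).
Local Notation "x |- y" := (s_vdash M x y) (at level 50, left associativity).
Local Notation "x ** y" := (s_circ M x y) (at level 40, left associativity).

Definition SubS (x y : M) : Prop :=
  exists P, (exists Q, P = Q |- y) /\ (exists v, P = (e |- x) ** v) /\
    (forall u a b v, ((u |- a) |- b) ** v = P -> exists c, b = a |- c \/ b = c |- a).

Lemma nonE a b v : (a |- b) ** v <> e.
Proof.
  destruct HM as (H1 & H2 & H3 & H4 & H5).
  destruct (H5 v) as [->|(y & z & ->)].
  - rewrite H3. apply H1.
  - rewrite H4. apply H1.
Qed.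

Lemma SubS_bot x : SubS x e <-> x = e.
Proof.
  pose proof nonE as NE.
  destruct HM as (H1 & H2 & H3 & H4 & H5).
  split.
  - intros (P & (Q & HQ) & (v & Hv) & Hc).
    destruct (H5 Q) as [->|(Q' & q & ->)].
    + destruct (H5 v) as [->|(v' & t & ->)].
      * rewrite H3 in Hv. subst P. apply H2 in Hv. destruct Hv; auto.
      * rewrite H4 in Hv. subst P. apply H2 in Hv. destruct Hv as [Hv _].
        exfalso; exact (NE _ _ _ (eq_sym Hv)).
    + destruct (Hc Q' q e e) as (c & [Hc'|Hc']).
      * rewrite H3. auto.
      * exfalso; exact (H1 _ _ (eq_sym Hc')).
      * exfalso; exact (H1 _ _ (eq_sym Hc')).
  - intros ->. exists (e |- e). split; [eauto|]. split.
    + exists e. rewrite H3. auto.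
    + intros u a b v Hv. exfalso.
      destruct (H5 v) as [->|(v' & t & ->)].
      * rewrite H3 in Hv. apply H2 in Hv. destruct Hv as [Hv _].
        exact (H1 _ _ Hv).
      * rewrite H4 in Hv. apply H2 in Hv. destruct Hv as [Hv _].
        exact (NE _ _ _ Hv).
Qed.

Lemma SubS_pair x y z :
  SubS x (y |- z) <-> (x = y |- z \/ SubS x y \/ SubS x z).
Proof.
  pose proof nonE as NE.
  destruct HM as (H1 & H2 & H3 & H4 & H5).
  split.
  - intros (P & (Q & HQ) & (v & Hv) & Hc).
    destruct (H5 Q) as [->|(Q' & q & ->)].
    + left. destruct (H5 v) as [->|(v' & t & ->)].
      * rewrite H3 in Hv. subst P. apply H2 in Hv. destruct Hv; auto.
      * rewrite H4 in Hv. subst P. apply H2 in Hv. destruct Hv as [Hv _].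
        exfalso; exact (NE _ _ _ (eq_sym Hv)).
    + right.
      assert (HSq : SubS x q).
      { exists (Q' |- q). split; [eauto|]. split.
        - destruct (H5 v) as [->|(v' & t & ->)].
          + rewrite H3 in Hv. subst P. apply H2 in Hv. destruct Hv as [Hv _].
            exfalso; exact (H1 _ _ Hv).
          + rewrite H4 in Hv. subst P. apply H2 in Hv. destruct Hv as [Hv _].
            exists v'; exact Hv.
        - intros u a b w Hw. apply (Hc u a b (w |- (y |- z))). rewrite H4, Hw, HQ. reflexivity. }
      destruct (Hc Q' q (y |- z) e) as (c & [Hc'|Hc']).
      * rewrite H3. auto.
      * apply H2 in Hc'. destruct Hc' as [-> _]. auto.
      * apply H2 in Hc'. destruct Hc' as [_ ->]. auto.
  - intros [->|[Hs|Hs]].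
    + exists (e |- (y |- z)). split; [eauto|]. split.
      * exists e. rewrite H3. auto.
      * intros u a b v Hv. exfalso.
        destruct (H5 v) as [->|(v' & t & ->)].
        -- rewrite H3 in Hv. apply H2 in Hv. destruct Hv as [Hv _].
           exact (H1 _ _ Hv).
        -- rewrite H4 in Hv. apply H2 in Hv. destruct Hv as [Hv _].
           exact (NE _ _ _ Hv).
    + destruct Hs as (P & (Q & HQ) & (v & Hv) & Hc).
      exists (P |- (y |- z)). split; [eauto|]. split.
      * exists (v |- (y |- z)). rewrite H4, Hv. auto.
      * intros u a b w Hw.
        destruct (H5 w) as [->|(w' & t & ->)].
        -- rewrite H3 in Hw. apply H2 in Hw. destruct Hw as [Hw ->].
           subst P. apply H2 in Hw. destruct Hw as [_ ->]. eauto.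
        -- rewrite H4 in Hw. apply H2 in Hw. destruct Hw as [Hw _].
           eauto.
    + destruct Hs as (P & (Q & HQ) & (v & Hv) & Hc).
      exists (P |- (y |- z)). split; [eauto|]. split.
      * exists (v |- (y |- z)). rewrite H4, Hv. auto.
      * intros u a b w Hw.
        destruct (H5 w) as [->|(w' & t & ->)].
        -- rewrite H3 in Hw. apply H2 in Hw. destruct Hw as [Hw ->].
           subst P. apply H2 in Hw. destruct Hw as [_ ->]. eauto.
        -- rewrite H4 in Hw. apply H2 in Hw. destruct Hw as [Hw _].
           eauto.
Qed.
End S.

Definition subF : form :=
  let last := fEx (fEq (tvar 1) (tvdash (tvar 0) (tvar 3))) in
  let first := fEx (fEq (tvar 1) (tcirc (tvdash te (tvar 2)) (tvar 0))) in
  let step := fAll (fAll (fAll (fAll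
          (fImp (fEq (tcirc (tvdash (tvdash (tvar 3) (tvar 2)) (tvar 1)) (tvar 0)) (tvar 4))
                (fEx (fOr (fEq (tvar 2) (tvdash (tvar 3) (tvar 0)))
                          (fEq (tvar 2) (tvdash (tvar 0) (tvar 3))))))))) in
  fEx (fAnd last (fAnd first step)).

Definition I0 : interp :=
  {| i_dim := 1;
     i_dom := fEq te te;
     i_eq := fEq (tvar 0) (tvar 1);
     i_bot := fEq (tvar 0) te;
     i_pair := fEq (tvdash (tvar 0) (tvar 1)) (tvar 2);
     i_sub := subF |}.

Lemma sub_sat (M : SeqStr) (u v : nat -> M) rho :
  sat M (blk 1 u (blk 1 v rho)) subF <-> SubS M (u 0) (v 0).
Proof.
  unfold SubS; simpl. split.
  - intros (P & (Q & HQ) & (w & Hw) & Hc). exists P. split; [eauto|]. split; [eauto|].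
    intros a b c d H. destruct (Hc a b c d H) as (c0 & Hc0). eauto.
  - intros (P & (Q & HQ) & (w & Hw) & Hc). exists P. split; [eauto|]. split; [eauto|].
    intros a b c d H. destruct (Hc a b c d H) as (c0 & Hc0). eauto.
Qed.

Lemma wf0 : interp_wf I0.
Proof. unfold interp_wf, subF; simpl; repeat split; auto with arith; repeat constructor. Qed.

Lemma blk0 {M : Type} (u r : nat -> M) : blk 1 u r 0 = u 0.
Proof. reflexivity. Qed.
Lemma blk1 {M : Type} (u r : nat -> M) : blk 1 u r 1 = r 0.
Proof. reflexivity. Qed.
Lemma blk2 {M : Type} (u r : nat -> M) : blk 1 u r 2 = r 1.
Proof. reflexivity. Qed.

Lemma model0 (M : SeqStr) : Seq_model M -> T_model (induced I0 M).
Proof.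
  intros HM. pose proof HM as (H1 & H2 & H3 & H4 & H5).
  unfold T_model, induced.
  cbn [tcar tD tE tBot tPair tSub i_dim i_dom i_eq i_bot i_pair i_sub I0].
  repeat split; intros;
  rewrite ?sub_sat in *; cbn [sat teval] in *; repeat rewrite ?blk0, ?blk1, ?blk2 in *;
  try congruence.
  all: try (exists (fun _ => s_e M); split; reflexivity).
  all: try (exists (fun _ => s_vdash M (x 0) (y 0)); split; reflexivity).
  all: try (match goal with Ha : s_vdash _ ?a ?b = ?z, Hb : s_vdash _ ?c ?d = ?z', Hc : ?z = ?z' |- _ =>
      let HH := fresh in assert (HH := H2 a b c d ltac:(congruence)); destruct HH; assumption end).
  all: try (match goal with Hb : ?b 0 = s_e _ |- _ => rewrite Hb in *;
      first [apply (proj1 (SubS_bot M HM _)); assumption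
            | apply (proj2 (SubS_bot M HM _)); assumption] end).
  all: try (match goal with Hw : s_vdash _ (?y 0) (?z 0) = ?w 0 |- _ => rewrite <- Hw in *;
      first [apply (proj1 (SubS_pair M HM _ _ _)); assumption
            | apply (proj2 (SubS_pair M HM _ _ _)); assumption] end).
Qed.

Theorem theorem7 :
  T_interpretable_in SeqPlus_model /\ T_interpretable_in Seq_model.
Proof.
  split; exists I0; split; try exact wf0.
  - intros M [HM _]. exact (model0 M HM).
  - exact model0.
Qed.
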